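(* Let $H$ be a non-zero real constant. Let $J\subset(0,\infty)$ be an open interval and $u:J\to\mathbb{R}$ a smooth function with $u'(\alpha)\neq0$ on $J$. Consider the rotational surface $\bar f(\alpha,v)=(\alpha\cos v,\ \alpha\sin v,\ u(\alpha))$ in $(\mathbb{R}^3,\|\cdot\|)$, oriented so that the horizontal component $(\eta_1,\eta_2)$ of its Birkhoff–Gauss map $\eta$ at $\bar f(\alpha,v)$ is a positive multiple of $-(\cos v,\sin v)$ (i.e. points toward the $x_3$-axis; equivalently, $\nabla\Phi(\eta)$ is a positive multiple of $f_u\times f_v$ for the height parametrization $f(u,v)=(\alpha(u)\cos v,\alpha(u)\sin v,u)$, $\alpha$ the local inverse of $u$). Then this surface has constant Minkowski mean curvature $H$ if and only if there are a constant $c_1$ and a fixed sign such that, for all $\alpha\in J$, $c_1-H\alpha^2>0$, $\alpha^{2m}>(c_1-H\alpha^2)^{2m}$, and $$u'(\alpha)=\pm\frac{(c_1-H\alpha^2)^{2m-1}}{\left\{\alpha^{2m}-(c_1-H\alpha^2)^{2m}\right\}^{\frac{2m-1}{2m}}},$$ i.e. $u(\alpha)=\pm\int\frac{(c_1-H\alpha^2)^{2m-1}}{\{\alpha^{2m}-(c_1-H\alpha^2)^{2m}\}^{\frac{2m-1}{2m}}}\,d\alpha$.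
   Context: Fix an integer $m\ge 2$. Let $\Phi(x_1,x_2,x_3)=(x_1^2+x_2^2)^m+x_3^{2m}$ and let $\|\cdot\|$ be the norm on $\mathbb{R}^3$ whose unit sphere is $S=\{x\in\mathbb{R}^3:\Phi(x)=1\}$ (a smooth, strictly convex surface). For a surface given by a parametrization $f(s,v)$, its Birkhoff–Gauss map $\eta$ is the map into $S$ defined by requiring $\eta\in S$ and $\nabla\Phi(\eta)=\mu\, f_s\times f_v$ for some function $\mu>0$, where $\times$ is the standard cross product (so the tangent plane of $S$ at $\eta(p)$ is parallel to $T_pM$, and $d\eta_p$ is an endomorphism of $T_pM$). The Minkowski mean curvature is $H=\tfrac12\operatorname{trace}(d\eta_p)$; its sign changes when the orientation is reversed. *)

(* Defs.v *)
From Stdlib Require Import Reals Lra Lia.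
From Coquelicot Require Import Coquelicot.
Open Scope R_scope.

Record R3 := mkR3 { x1 : R; x2 : R; x3 : R }.

Definition addv (p q : R3) : R3 := mkR3 (x1 p + x1 q) (x2 p + x2 q) (x3 p + x3 q).
Definition scalev (c : R) (p : R3) : R3 := mkR3 (c * x1 p) (c * x2 p) (c * x3 p).
Definition cross (p q : R3) : R3 :=
  mkR3 (x2 p * x3 q - x3 p * x2 q)
       (x3 p * x1 q - x1 p * x3 q)
       (x1 p * x2 q - x2 p * x1 q).

(* Phi(x) = (x1^2 + x2^2)^m + x3^(2m); the unit sphere S of the norm is Phi = 1 *)
Definition Phi (m : nat) (p : R3) : R :=
  (x1 p ^ 2 + x2 p ^ 2) ^ m + x3 p ^ (2 * m).

Definition gradPhi (m : nat) (p : R3) : R3 :=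
  mkR3 (Derive (fun t => Phi m (mkR3 t (x2 p) (x3 p))) (x1 p))
       (Derive (fun t => Phi m (mkR3 (x1 p) t (x3 p))) (x2 p))
       (Derive (fun t => Phi m (mkR3 (x1 p) (x2 p) t)) (x3 p)).

Definition d_s (F : R -> R -> R3) (s v : R) : R3 :=
  mkR3 (Derive (fun t => x1 (F t v)) s)
       (Derive (fun t => x2 (F t v)) s)
       (Derive (fun t => x3 (F t v)) s).
Definition d_v (F : R -> R -> R3) (s v : R) : R3 :=
  mkR3 (Derive (fun t => x1 (F s t)) v)
       (Derive (fun t => x2 (F s t)) v)
       (Derive (fun t => x3 (F s t)) v).
Definition has_partials (F : R -> R -> R3) (s v : R) : Prop :=
  ex_derive (fun t => x1 (F t v)) s /\ ex_derive (fun t => x2 (F t v)) s /\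
  ex_derive (fun t => x3 (F t v)) s /\
  ex_derive (fun t => x1 (F s t)) v /\ ex_derive (fun t => x2 (F s t)) v /\
  ex_derive (fun t => x3 (F s t)) v.

(* eta is a Birkhoff-Gauss map of the parametrized surface f on the domain D,
   for one of the two orientations: eta in S and grad Phi(eta) parallel to
   f_s x f_v.  The orientation is fixed separately (see rot_CMC). *)
Definition is_BG_map (m : nat) (f eta : R -> R -> R3) (D : R -> R -> Prop) : Prop :=
  forall s v, D s v ->
    Phi m (eta s v) = 1 /\
    exists mu, mu <> 0 /\ gradPhi m (eta s v) = scalev mu (cross (d_s f s v) (d_v f s v)).

(* Minkowski mean curvature of f (w.r.t. eta) at (s,v) equals H:
   d eta_p is the endomorphism of T_pM with d eta(f_s) = a f_s + b f_v,
   d eta(f_v) = c f_s + d f_v, and H = (1/2) trace = (a + d)/2. *)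
Definition mink_mean_curv_is (f eta : R -> R -> R3) (s v H : R) : Prop :=
  has_partials eta s v /\
  exists a b c d,
    d_s eta s v = addv (scalev a (d_s f s v)) (scalev b (d_v f s v)) /\
    d_v eta s v = addv (scalev c (d_s f s v)) (scalev d (d_v f s v)) /\
    (a + d) / 2 = H.

Definition inJ (a : R) (b : Rbar) (x : R) : Prop := a < x /\ Rbar_lt (Finite x) b.

Definition rot_surf (u : R -> R) : R -> R -> R3 :=
  fun al v => mkR3 (al * cos v) (al * sin v) (u al).

Definition rot_CMC (m : nat) (a : R) (b : Rbar) (u : R -> R) (H : R) : Prop :=
  exists eta : R -> R -> R3,
    is_BG_map m (rot_surf u) eta (fun al _ => inJ a b al) /\
    (forall al v, inJ a b al ->
       exists lam, lam > 0 /\ x1 (eta al v) = - lam * cos v /\ x2 (eta al v) = - lam * sin v) /\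
    (forall al v, inJ a b al -> mink_mean_curv_is (rot_surf u) eta al v H).

(* Main.v *)
Require Import Defs.
From Stdlib Require Import Reals Lra Lia.
From Coquelicot Require Import Coquelicot.
Open Scope R_scope.
Lemma cont_of_ex (f : R -> R) x : ex_derive f x -> continuity_pt f x.
Proof. intros H. apply continuity_pt_filterlim. apply (ex_derive_continuous f x H). Qed.

Lemma gradPhi_eq m p : (1 <= m)%nat ->
  gradPhi m p = mkR3 (2 * INR m * (x1 p ^ 2 + x2 p ^ 2) ^ (m - 1) * x1 p)
                     (2 * INR m * (x1 p ^ 2 + x2 p ^ 2) ^ (m - 1) * x2 p)
                     (INR (2 * m) * x3 p ^ (2 * m - 1)).
Proof.
  intros Hm. destruct p as [p1 p2 p3]. unfold gradPhi, Phi; cbn [x1 x2 x3].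
  f_equal; apply is_derive_unique; auto_derive; auto.
  - replace (p1*(p1*1)+p2*(p2*1)) with (p1^2+p2^2) by ring.
    replace (Init.Nat.pred m) with (m - 1)%nat by lia. ring.
  - replace (p1*(p1*1)+p2*(p2*1)) with (p1^2+p2^2) by ring.
    replace (Init.Nat.pred m) with (m - 1)%nat by lia. ring.
  - replace (m + (m + 0))%nat with (2 * m)%nat by lia.
    replace (Init.Nat.pred (2*m)) with (2 * m - 1)%nat by lia. ring.
Qed.

Lemma d_s_rot u al v : d_s (rot_surf u) al v = mkR3 (cos v) (sin v) (Derive u al).
Proof.
  unfold d_s, rot_surf; cbn [x1 x2 x3]. f_equal; try reflexivity;
  apply is_derive_unique; auto_derive; auto; ring.
Qed.

Lemma d_v_rot u al v : d_v (rot_surf u) al v = mkR3 (- al * sin v) (al * cos v) 0.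
Proof.
  unfold d_v, rot_surf; cbn [x1 x2 x3]. f_equal;
  apply is_derive_unique; auto_derive; auto; ring.
Qed.

Lemma pow_even_nonneg x m : 0 <= x ^ (2 * m).
Proof. rewrite pow_mult. apply pow_le. nra. Qed.

Lemma pow_even_pos x m : x <> 0 -> 0 < x ^ (2 * m).
Proof. intros. rewrite pow_mult. apply pow_lt. nra. Qed.

Lemma sg_pow sg m : (sg = 1 \/ sg = -1) -> (1 <= m)%nat ->
  sg ^ (2 * m) = 1 /\ sg ^ (2 * m - 1) = sg.
Proof.
  intros Hs Hm.
  assert (E : sg ^ (2 * m) = 1) by (destruct Hs; subst;
     [apply pow1 | rewrite pow_mult; replace ((-1)^2) with 1 by ring; apply pow1]).
  split; auto.
  assert (E2 : sg ^ (2 * m) = sg ^ (2 * m - 1) * sg).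
  { replace (2 * m)%nat with (2 * m - 1 + 1)%nat at 1 by lia. rewrite pow_add. ring. }
  destruct Hs; subst; nra.
Qed.

Lemma odd_pow_nonpos y m : (1 <= m)%nat -> y <= 0 -> y ^ (2 * m - 1) <= 0.
Proof.
  intros Hm Hy. replace (2 * m - 1)%nat with (2 * (m - 1) + 1)%nat by lia.
  rewrite pow_add. pose proof (pow_even_nonneg y (m - 1)). rewrite pow_1. nra.
Qed.

Lemma core m al lam sg z : (1 <= m)%nat -> 0 < al -> 0 < lam -> (sg = 1 \/ sg = -1) ->
  z ^ (2 * m) = 1 - lam ^ (2 * m) -> 0 < sg * z ->
  z ^ (2 * m - 1) * (sg * (al * lam) ^ (2 * m - 1)
      / Rpower (al ^ (2 * m) - (al * lam) ^ (2 * m)) (INR (2 * m - 1) / INR (2 * m)))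
  = lam ^ (2 * m - 1).
Proof.
  intros Hm Hal Hl Hs Hz Hsz.
  destruct (sg_pow sg m Hs Hm) as [S1 S2].
  set (y := al * (sg * z)).
  assert (Hy : 0 < y) by (unfold y; nra).
  assert (E : al ^ (2 * m) - (al * lam) ^ (2 * m) = y ^ (2 * m)).
  { unfold y. rewrite !Rpow_mult_distr, S1, Hz. ring. }
  rewrite E, <- (Rpower_pow (2 * m) y Hy), Rpower_mult.
  replace (INR (2 * m) * (INR (2 * m - 1) / INR (2 * m))) with (INR (2 * m - 1))
    by (field; apply not_0_INR; lia).
  rewrite (Rpower_pow _ y Hy). unfold y. rewrite !Rpow_mult_distr, S2.
  assert (z <> 0) by (intro; subst; lra).
  assert (sg <> 0) by (destruct Hs; lra).
  assert (z ^ (2 * m - 1) <> 0) by (apply pow_nonzero; auto).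
  assert (al ^ (2 * m - 1) <> 0) by (apply pow_nonzero; lra).
  field. auto.
Qed.

Lemma pow_lt_strict x y n : 0 <= x < y -> (1 <= n)%nat -> x ^ n < y ^ n.
Proof.
  intros Hxy Hn. induction n as [|n IH]; [lia|].
  destruct n as [|n]; [simpl; lra|].
  assert (A : x ^ S n < y ^ S n) by (apply IH; lia).
  pose proof (pow_le x (S n) (proj1 Hxy)).
  change (x * x ^ S n < y * y ^ S n). nra.
Qed.

Lemma lam_unique m l1 l2 z1 z2 w : (1 <= m)%nat -> 0 < l1 -> 0 < l2 ->
  l1 ^ (2 * m - 1) = z1 ^ (2 * m - 1) * w -> l2 ^ (2 * m - 1) = z2 ^ (2 * m - 1) * w ->
  l1 ^ (2 * m) + z1 ^ (2 * m) = 1 -> l2 ^ (2 * m) + z2 ^ (2 * m) = 1 -> l1 = l2.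
Proof.
  intros Hm H1 H2 E1 E2 F1 F2.
  assert (K : forall l z, l ^ (2 * m - 1) = z ^ (2 * m - 1) * w -> l ^ (2 * m) + z ^ (2 * m) = 1 ->
     (l ^ (2 * m - 1)) ^ (2 * m) = (1 - l ^ (2 * m)) ^ (2 * m - 1) * w ^ (2 * m)).
  { intros l z E F. rewrite E, Rpow_mult_distr. f_equal.
    rewrite <- !pow_mult, Nat.mul_comm, pow_mult. f_equal. lra. }
  pose proof (K _ _ E1 F1) as K1. pose proof (K _ _ E2 F2) as K2.
  pose proof (pow_even_nonneg z1 m). pose proof (pow_even_nonneg z2 m).
  pose proof (pow_even_nonneg w m).
  assert (Mono : forall x y zx zy, 0 < x < y -> x ^ (2 * m) + zx ^ (2 * m) = 1 ->
     y ^ (2 * m) + zy ^ (2 * m) = 1 ->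
     (x ^ (2 * m - 1)) ^ (2 * m) = (1 - x ^ (2 * m)) ^ (2 * m - 1) * w ^ (2 * m) ->
     (y ^ (2 * m - 1)) ^ (2 * m) = (1 - y ^ (2 * m)) ^ (2 * m - 1) * w ^ (2 * m) -> False).
  { intros x y zx zy Hxy Fx Fy Kx Ky.
    pose proof (pow_even_nonneg zy m).
    assert (A : x ^ (2 * m) < y ^ (2 * m)) by (apply pow_lt_strict; lra || lia).
    assert (B : x ^ (2 * m - 1) < y ^ (2 * m - 1)) by (apply pow_lt_strict; lra || lia).
    assert (C : (x ^ (2 * m - 1)) ^ (2 * m) < (y ^ (2 * m - 1)) ^ (2 * m)).
    { apply pow_lt_strict; [|lia]. split; [apply pow_le; lra | exact B]. }
    assert (D : (1 - y ^ (2 * m)) ^ (2 * m - 1) <= (1 - x ^ (2 * m)) ^ (2 * m - 1))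
      by (apply pow_incr; lra).
    assert (D2 : (1 - y ^ (2 * m)) ^ (2 * m - 1) * w ^ (2 * m) <=
                 (1 - x ^ (2 * m)) ^ (2 * m - 1) * w ^ (2 * m))
      by (apply Rmult_le_compat_r; lra).
    lra. }
  destruct (Rtotal_order l1 l2) as [Lt|[Eq|Gt]]; auto.
  - exfalso. apply (Mono l1 l2 z1 z2); auto.
  - exfalso. apply (Mono l2 l1 z2 z1); auto.
Qed.

Lemma inJ_between a b x y t : inJ a b x -> inJ a b y -> Rmin x y <= t <= Rmax x y -> inJ a b t.
Proof.
  unfold inJ, Rmin, Rmax. intros [Hx1 Hx2] [Hy1 Hy2] Ht.
  destruct (Rle_dec x y); split; try lra;
  destruct b as [b0| |]; simpl in *; auto; lra.
Qed.

Lemma sign_const (g : R -> R) a b :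
  (forall x, inJ a b x -> continuity_pt g x) -> (forall x, inJ a b x -> g x <> 0) ->
  forall x y, inJ a b x -> inJ a b y -> 0 < g x -> 0 < g y.
Proof.
  intros Hc Hn x y Hx Hy Hgx.
  destruct (Rlt_dec 0 (g y)) as [P|P]; auto. exfalso.
  assert (Hgy : g y < 0) by (pose proof (Hn y Hy); lra).
  destruct (Rtotal_order x y) as [Lt|[Eq|Gt]].
  - destruct (Ranalysis5.IVT_interv (fun t => - g t) x y) as [c [Hc1 Hc2]]; auto; try lra.
    + intros t Ht. apply continuity_pt_opp. apply Hc.
      apply (inJ_between a b x y t Hx Hy). unfold Rmin, Rmax; destruct (Rle_dec x y); lra.
    + apply (Hn c). apply (inJ_between a b x y c Hx Hy). unfold Rmin, Rmax; destruct (Rle_dec x y); lra.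
      lra.
  - subst. lra.
  - destruct (Ranalysis5.IVT_interv g y x) as [c [Hc1 Hc2]]; auto; try lra.
    + intros t Ht. apply Hc.
      apply (inJ_between a b x y t Hx Hy). unfold Rmin, Rmax; destruct (Rle_dec x y); lra.
    + apply (Hn c); auto. apply (inJ_between a b x y c Hx Hy). unfold Rmin, Rmax; destruct (Rle_dec x y); lra.
Qed.

Lemma const_on_J (F : R -> R) a b :
  (forall x, inJ a b x -> is_derive F x 0) ->
  forall x y, inJ a b x -> inJ a b y -> F x = F y.
Proof.
  intros HF x y Hx Hy.
  destruct (MVT_gen F x y (fun _ => 0)) as [c [_ Hc]].
  - intros t Ht. apply HF. apply (inJ_between a b x y t Hx Hy). lra.
  - intros t Ht. apply cont_of_ex. exists 0. apply HF. apply (inJ_between a b x y t Hx Hy). lra.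
  - lra.
Qed.

Lemma J_nonempty a b : Rbar_lt (Finite a) b -> exists x, inJ a b x.
Proof.
  intros H. destruct b as [b0| |]; simpl in H.
  - exists ((a + b0) / 2). split; simpl; lra.
  - exists (a + 1). split; simpl; auto; lra.
  - contradiction.
Qed.

Definition lamf (c1 H t : R) : R := (c1 - H * t ^ 2) / t.
Definition etaB (m : nat) (c1 H sg : R) (t v : R) : R3 :=
  mkR3 (- lamf c1 H t * cos v) (- lamf c1 H t * sin v)
       (sg * Rpower (1 - lamf c1 H t ^ (2 * m)) (/ INR (2 * m))).

Lemma is_derive_lamf c1 H t : t <> 0 -> is_derive (lamf c1 H) t (- c1 / t ^ 2 - H).
Proof. intros Ht. unfold lamf. auto_derive; auto. field; auto. Qed.

Lemma sq_sum l v : (- l * cos v) ^ 2 + (- l * sin v) ^ 2 = l ^ 2.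
Proof. pose proof (sin2_cos2 v) as E. unfold Rsqr in E.
  replace (l ^ 2) with (l ^ 2 * (sin v * sin v + cos v * cos v)) by (rewrite E; ring). ring. Qed.

Lemma back_facts m a b u H c1 sg al : (1 <= m)%nat -> 0 <= a -> (sg = 1 \/ sg = -1) ->
  (0 < c1 - H * al ^ 2 /\ (c1 - H * al ^ 2) ^ (2 * m) < al ^ (2 * m) /\
      Derive u al = sg * (c1 - H * al ^ 2) ^ (2 * m - 1)
        / Rpower (al ^ (2 * m) - (c1 - H * al ^ 2) ^ (2 * m))
                 (INR (2 * m - 1) / INR (2 * m))) -> inJ a b al ->
  let l := lamf c1 H al in let z := sg * Rpower (1 - l ^ (2 * m)) (/ INR (2 * m)) in
  0 < al /\ 0 < l /\ 0 < 1 - l ^ (2 * m) /\ z ^ (2 * m) = 1 - l ^ (2 * m) /\ 0 < sg * z /\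
  z ^ (2 * m - 1) * Derive u al = l ^ (2 * m - 1).
Proof.
  intros Hm Ha Hs [P1 [P2 P3]] [HJ _] l z.
  assert (Hal : 0 < al) by lra.
  assert (El : c1 - H * al ^ 2 = al * l) by (unfold l, lamf; field; lra).
  assert (Hl : 0 < l) by (unfold l, lamf; apply Rdiv_lt_0_compat; lra).
  rewrite El in P2, P3. rewrite Rpow_mult_distr in P2.
  pose proof (pow_lt al (2 * m) Hal).
  assert (Hw : 0 < 1 - l ^ (2 * m)) by nra.
  destruct (sg_pow sg m Hs Hm) as [S1 S2].
  assert (Rp : 0 < Rpower (1 - l ^ (2 * m)) (/ INR (2 * m))) by (unfold Rpower; apply exp_pos).
  assert (Hz : z ^ (2 * m) = 1 - l ^ (2 * m)).
  { unfold z. rewrite Rpow_mult_distr, S1, <- (Rpower_pow _ _ Rp), Rpower_mult.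
    rewrite Rinv_l by (apply not_0_INR; lia). rewrite Rpower_1; lra. }
  assert (Hsz : 0 < sg * z) by (unfold z; destruct Hs; subst; nra).
  repeat split; auto.
  rewrite P3. apply core; auto.
Qed.

Lemma pow_aux l m : (1 <= m)%nat -> (l ^ 2) ^ (m - 1) * l = l ^ (2 * m - 1).
Proof.
  intros Hm. replace (2 * m - 1)%nat with (2 * (m - 1) + 1)%nat by lia.
  rewrite pow_add, pow_mult, pow_1. reflexivity.
Qed.

Lemma deriv_eta3 m c1 H sg al : (1 <= m)%nat -> al <> 0 -> 0 < 1 - lamf c1 H al ^ (2 * m) ->
  is_derive (fun t => sg * Rpower (1 - lamf c1 H t ^ (2 * m)) (/ INR (2 * m))) al
    (sg * / INR (2 * m) * (- (INR (2 * m) * lamf c1 H al ^ (2 * m - 1) * (- c1 / al ^ 2 - H)))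
      / (1 - lamf c1 H al ^ (2 * m)) * Rpower (1 - lamf c1 H al ^ (2 * m)) (/ INR (2 * m))).
Proof.
  intros Hm Hal Hw. unfold Rpower. auto_derive.
  - split; [exists (- c1 / al ^ 2 - H); apply is_derive_lamf; auto|].
    change (m + (m + 0))%nat with (2 * m)%nat. split; [lra|trivial].
  - change (m + (m + 0))%nat with (2 * m)%nat.
    replace (Init.Nat.pred (2 * m)) with (2 * m - 1)%nat by lia.
    assert (DL : Derive (fun x : R => lamf c1 H x) al = - c1 / al ^ 2 - H)
      by (apply is_derive_unique, is_derive_lamf; auto).
    rewrite DL.
    assert (INR (2 * m) <> 0) by (apply not_0_INR; lia).
    unfold Rminus. field. split; auto. lra.
Qed.

Lemma backward m a b u H c1 sg : (1 <= m)%nat -> 0 <= a -> (sg = 1 \/ sg = -1) ->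
  (forall al, inJ a b al ->
      0 < c1 - H * al ^ 2 /\
      (c1 - H * al ^ 2) ^ (2 * m) < al ^ (2 * m) /\
      Derive u al =
        sg * (c1 - H * al ^ 2) ^ (2 * m - 1)
        / Rpower (al ^ (2 * m) - (c1 - H * al ^ 2) ^ (2 * m))
                 (INR (2 * m - 1) / INR (2 * m))) ->
  rot_CMC m a b u H.
Proof.
  intros Hm Ha Hs Hall.
  assert (N : INR (2 * m) <> 0) by (apply not_0_INR; lia).
  assert (N2 : INR (2 * m) = 2 * INR m) by (rewrite mult_INR; simpl; ring).
  exists (etaB m c1 H sg). split; [|split].
  - intros al v HJ.
    destruct (back_facts m a b u H c1 sg al Hm Ha Hs (Hall al HJ) HJ)
      as [Hal [Hl [Hw [Hz [Hsz HK]]]]].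
    set (l := lamf c1 H al) in *.
    set (z := sg * Rpower (1 - l ^ (2 * m)) (/ INR (2 * m))) in *.
    assert (Hz0 : z <> 0) by (intro E; rewrite E in Hsz; lra).
    assert (HZ : z ^ (2 * m - 1) <> 0) by (apply pow_nonzero; auto).
    split.
    + unfold Phi, etaB; cbn [x1 x2 x3]. fold l. fold z.
      rewrite sq_sum, <- pow_mult, Hz. ring.
    + exists (INR (2 * m) * z ^ (2 * m - 1) / al). split.
      * apply Rmult_integral_contrapositive_currified; [|apply Rinv_neq_0_compat; lra].
        apply Rmult_integral_contrapositive_currified; auto.
      * rewrite gradPhi_eq by auto. rewrite d_s_rot, d_v_rot.
        unfold etaB, cross, scalev; cbn [x1 x2 x3]. fold l. fold z.
        rewrite sq_sum. pose proof (sin2_cos2 v) as E. unfold Rsqr in E.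
        f_equal.
        -- transitivity (-(2 * INR m) * cos v * ((l ^ 2) ^ (m - 1) * l)); [ring|].
           rewrite pow_aux, <- HK by auto. rewrite N2. field. lra.
        -- transitivity (-(2 * INR m) * sin v * ((l ^ 2) ^ (m - 1) * l)); [ring|].
           rewrite pow_aux, <- HK by auto. rewrite N2. field. lra.
        -- replace (cos v * (al * cos v) - sin v * (- al * sin v)) with al
             by (transitivity (al * (sin v * sin v + cos v * cos v)); [rewrite E; ring | ring]).
           field. lra.
  - intros al v HJ.
    destruct (back_facts m a b u H c1 sg al Hm Ha Hs (Hall al HJ) HJ)
      as [Hal [Hl _]].
    exists (lamf c1 H al). unfold etaB; cbn [x1 x2]. repeat split; try ring; lra.
  - intros al v HJ.
    destruct (back_facts m a b u H c1 sg al Hm Ha Hs (Hall al HJ) HJ)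
      as [Hal [Hl [Hw [Hz [Hsz HK]]]]].
    assert (Hal0 : al <> 0) by lra.
    assert (DL : Derive (fun x : R => lamf c1 H x) al = - c1 / al ^ 2 - H)
      by (apply is_derive_unique, is_derive_lamf; auto).
    pose proof (deriv_eta3 m c1 H sg al Hm Hal0 Hw) as D3.
    split.
    + unfold has_partials, etaB; cbn [x1 x2 x3].
      repeat split; try (auto_derive; repeat split; auto;
                         exists (- c1 / al ^ 2 - H); apply is_derive_lamf; auto).
      eexists; exact D3.
    + exists (c1 / al ^ 2 + H), 0, 0, (- lamf c1 H al / al).
      split; [|split].
      * rewrite d_s_rot, d_v_rot. unfold d_s, etaB, addv, scalev; cbn [x1 x2 x3].
        f_equal.
        -- apply is_derive_unique. auto_derive.
           ++ exists (- c1 / al ^ 2 - H); apply is_derive_lamf; auto.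
           ++ rewrite DL. field. auto.
        -- apply is_derive_unique. auto_derive.
           ++ exists (- c1 / al ^ 2 - H); apply is_derive_lamf; auto.
           ++ rewrite DL. field. auto.
        -- etransitivity; [apply is_derive_unique; exact D3|].
           set (l := lamf c1 H al) in *.
           set (R0 := Rpower (1 - l ^ (2 * m)) (/ INR (2 * m))) in *.
           set (z := sg * R0) in *.
           assert (Hz0 : z <> 0) by (intro E; rewrite E in Hsz; lra).
           assert (HZ : z ^ (2 * m - 1) <> 0) by (apply pow_nonzero; auto).
           assert (Ew : 1 - l ^ (2 * m) = z ^ (2 * m - 1) * z).
           { rewrite <- Hz. replace (2 * m)%nat with (2 * m - 1 + 1)%nat at 1 by lia.
             rewrite pow_add, pow_1. reflexivity. }
           rewrite Ew, <- HK. unfold z. field.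
           unfold z in Hsz. repeat split; auto; intro E; rewrite E in Hsz; lra.
      * rewrite d_s_rot, d_v_rot. unfold d_v, etaB, addv, scalev; cbn [x1 x2 x3].
        f_equal; apply is_derive_unique; auto_derive; auto. all: try (field; auto).
      * unfold lamf. field. auto.
Qed.

Lemma forward m a b u H : (1 <= m)%nat -> 0 <= a -> Rbar_lt (Finite a) b ->
  (forall al, inJ a b al -> continuity_pt (Derive u) al) ->
  (forall al, inJ a b al -> Derive u al <> 0) ->
  rot_CMC m a b u H ->
  exists c1 sg : R, (sg = 1 \/ sg = -1) /\
    forall al, inJ a b al ->
      0 < c1 - H * al ^ 2 /\
      (c1 - H * al ^ 2) ^ (2 * m) < al ^ (2 * m) /\
      Derive u al =
        sg * (c1 - H * al ^ 2) ^ (2 * m - 1)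
        / Rpower (al ^ (2 * m) - (c1 - H * al ^ 2) ^ (2 * m))
                 (INR (2 * m - 1) / INR (2 * m)).
Proof.
  intros Hm Ha Hab Hcont Hu' [eta [HBG [Hor Hmc]]].
  assert (N : INR (2 * m) <> 0) by (apply not_0_INR; lia).
  assert (N2 : INR (2 * m) = 2 * INR m) by (rewrite mult_INR; simpl; ring).
  assert (Nm : INR m <> 0) by (apply not_0_INR; lia).
  assert (PW : forall al v, inJ a b al -> exists lam, 0 < lam /\
     x1 (eta al v) = - lam * cos v /\ x2 (eta al v) = - lam * sin v /\
     lam ^ (2 * m - 1) = x3 (eta al v) ^ (2 * m - 1) * Derive u al /\
     lam ^ (2 * m) + x3 (eta al v) ^ (2 * m) = 1 /\ x3 (eta al v) <> 0).
  { intros al v HJ. destruct (Hor al v HJ) as [lam [Hl [E1 E2]]].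
    destruct (HBG al v HJ) as [HP [mu [Hmu Hg]]].
    assert (Hal : 0 < al) by (destruct HJ; lra).
    rewrite gradPhi_eq in Hg by auto. rewrite d_s_rot, d_v_rot in Hg.
    unfold cross, scalev in Hg; cbn [x1 x2 x3] in Hg. rewrite E1, E2, sq_sum in Hg.
    injection Hg as G1 G2 G3.
    change (lam * (lam * 1)) with (lam ^ 2) in G1, G2.
    change (m + (m + 0))%nat with (2 * m)%nat in G3.
    unfold Phi in HP. rewrite E1, E2, sq_sum, <- pow_mult in HP.
    set (z := x3 (eta al v)) in *.
    pose proof (sin2_cos2 v) as E; unfold Rsqr in E.
    assert (G : 2 * INR m * ((lam ^ 2) ^ (m - 1) * lam) = mu * (Derive u al * al)).
    { transitivity (-((2 * INR m * (lam ^ 2) ^ (m - 1) * (- lam * cos v)) * cos v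
                    + (2 * INR m * (lam ^ 2) ^ (m - 1) * (- lam * sin v)) * sin v)).
      { transitivity (2 * INR m * ((lam ^ 2) ^ (m - 1) * lam) * (sin v * sin v + cos v * cos v));
        [rewrite E; ring | ring]. }
      rewrite G1, G2.
      transitivity (mu * (Derive u al * al) * (sin v * sin v + cos v * cos v)); [ring | rewrite E; ring]. }
    assert (G3' : 2 * INR m * z ^ (2 * m - 1) = mu * al).
    { rewrite <- N2, G3.
      transitivity (mu * al * (sin v * sin v + cos v * cos v)); [ring | rewrite E; ring]. }
    rewrite pow_aux in G by auto.
    exists lam. repeat split; auto.
    - apply Rmult_eq_reg_l with (2 * INR m); [|lra]. rewrite G.
      transitivity ((mu * al) * Derive u al); [ring|]. rewrite <- G3'. ring.
    - intro Hz0. rewrite Hz0, pow_i in G3' by lia.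
      assert (mu * al = 0) by lra. apply Rmult_integral in H0. destruct H0; lra. }
  set (L := fun t => - x1 (eta t 0)).
  assert (LU : forall al v, inJ a b al -> x2 (eta al v) = - L al * sin v).
  { intros al v HJ.
    destruct (PW al v HJ) as [lv [Hlv [A1 [A2 [A3 [A4 _]]]]]].
    destruct (PW al 0 HJ) as [l0 [Hl0 [B1 [B2 [B3 [B4 _]]]]]].
    assert (EL : L al = l0) by (unfold L; rewrite B1, cos_0; ring).
    rewrite A2, EL. f_equal. f_equal.
    apply (lam_unique m lv l0 (x3 (eta al v)) (x3 (eta al 0)) (Derive u al)); auto. }
  set (F := fun t => t * L t + H * t ^ 2).
  assert (HF : forall al, inJ a b al -> is_derive F al 0).
  { intros al HJ.
    assert (Hal : 0 < al) by (destruct HJ; lra).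
    destruct (Hmc al 0 HJ) as [HP [a0 [b0 [c0 [d0 [Hds [Hdv Hsum]]]]]]].
    destruct HP as [[l1 P1] _].
    rewrite d_s_rot, d_v_rot in Hds, Hdv. unfold d_s, d_v, addv, scalev in Hds, Hdv.
    cbn [x1 x2 x3] in Hds, Hdv.
    injection Hds as S1 S2 S3. injection Hdv as V1 V2 V3.
    rewrite cos_0, sin_0 in S1, V2.
    assert (D1 : Derive (fun t => x1 (eta t 0)) al = l1) by (apply is_derive_unique; exact P1).
    rewrite D1 in S1.
    assert (DV : Derive (fun t => x2 (eta al t)) 0 = - L al).
    { rewrite (Derive_ext _ (fun t => - L al * sin t) _ (fun t => LU al t HJ)).
      apply is_derive_unique. auto_derive; auto. rewrite cos_0. ring. }
    rewrite DV in V2.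
    assert (PL : is_derive L al (- l1)) by (unfold L; apply (is_derive_opp (fun t => x1 (eta t 0))); exact P1).
    unfold F. auto_derive.
    - exists (- l1). exact PL.
    - assert (DL : Derive (fun t => L t) al = - l1) by (apply is_derive_unique; exact PL).
      rewrite DL.
      assert (El1 : l1 = 2 * H - d0) by lra. rewrite El1. lra. }
  destruct (J_nonempty a b Hab) as [al0 H0].
  assert (SG : exists sg, (sg = 1 \/ sg = -1) /\ forall al, inJ a b al -> 0 < sg * Derive u al).
  { destruct (Rlt_dec 0 (Derive u al0)) as [P|P].
    - exists 1. split; auto. intros al HJ. rewrite Rmult_1_l.
      apply (sign_const (Derive u) a b Hcont Hu' al0 al); auto.
    - exists (-1). split; auto. intros al HJ.
      replace (-1 * Derive u al) with ((fun x => - Derive u x) al) by (simpl; ring).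
      apply (sign_const (fun x => - Derive u x) a b) with al0; auto.
      + intros x Hx. apply continuity_pt_opp. auto.
      + intros x Hx. pose proof (Hu' x Hx). lra.
      + pose proof (Hu' al0 H0). lra. }
  destruct SG as [sg [Hs SG]].
  destruct (sg_pow sg m Hs Hm) as [Sg1 Sg2].
  exists (F al0), sg. split; auto. intros al HJ.
  assert (Hal : 0 < al) by (destruct HJ; lra).
  destruct (PW al 0 HJ) as [lam [Hl [B1 [B2 [B3 [B4 Bz]]]]]].
  assert (EL : L al = lam) by (unfold L; rewrite B1, cos_0; ring).
  assert (EF : F al0 - H * al ^ 2 = al * lam).
  { rewrite (const_on_J F a b HF al0 al H0 HJ). unfold F. rewrite EL. ring. }
  rewrite EF.
  set (z := x3 (eta al 0)) in *.
  pose proof (pow_even_pos z m Bz) as Zp.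
  pose proof (pow_lt al (2 * m) Hal) as Ap.
  split; [nra|split].
  - rewrite Rpow_mult_distr. nra.
  - assert (HZ : z ^ (2 * m - 1) <> 0) by (apply pow_nonzero; auto).
    assert (Hsz : 0 < sg * z).
    { destruct (Rle_dec (sg * z) 0) as [Le|Gt]; [|lra]. exfalso.
      pose proof (odd_pow_nonpos (sg * z) m Hm Le) as O.
      rewrite Rpow_mult_distr, Sg2 in O.
      pose proof (SG al HJ) as Q.
      pose proof (pow_lt lam (2 * m - 1) Hl) as Lp.
      rewrite B3 in Lp.
      assert (sg * sg = 1) by (destruct Hs; subst; ring).
      assert (Eq : (sg * z ^ (2 * m - 1)) * (sg * Derive u al) = z ^ (2 * m - 1) * Derive u al)
        by (transitivity (sg * sg * (z ^ (2 * m - 1) * Derive u al)); [ring | rewrite H1; ring]).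
      nra. }
    apply Rmult_eq_reg_l with (z ^ (2 * m - 1)); auto.
    rewrite core; auto. lra.
Qed.

Theorem theorem6p1 (m : nat) (Hm : (2 <= m)%nat) (H : R) (HH : H <> 0)
  (a : R) (b : Rbar) (Ha : 0 <= a) (Hab : Rbar_lt (Finite a) b)
  (u : R -> R)
  (Hsmooth : forall (k : nat) (al : R), inJ a b al -> ex_derive (Derive_n u k) al)
  (Hu' : forall al, inJ a b al -> Derive u al <> 0) :
  rot_CMC m a b u H <->
  exists c1 sg : R, (sg = 1 \/ sg = -1) /\
    forall al, inJ a b al ->
      0 < c1 - H * al ^ 2 /\
      (c1 - H * al ^ 2) ^ (2 * m) < al ^ (2 * m) /\
      Derive u al =
        sg * (c1 - H * al ^ 2) ^ (2 * m - 1)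
        / Rpower (al ^ (2 * m) - (c1 - H * al ^ 2) ^ (2 * m))
                 (INR (2 * m - 1) / INR (2 * m)).
Proof.
  assert (Hm1 : (1 <= m)%nat) by lia.
  split.
  - apply forward; auto.
    intros al HJ. apply cont_of_ex. exact (Hsmooth 1%nat al HJ).
  - intros [c1 [sg [Hs Hall]]]. apply (backward m a b u H c1 sg); auto.
Qed.
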